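(* Let $n\ge 1$, let $c\in\mathbb{R}^n$ with $c_1\ge c_2\ge\cdots\ge c_n\ge 0$, and let $u\in\mathbb{R}^n$ with $u_i>0$ for all $i$. Consider the problem \[ \text{(P)}\qquad \min\ f(x)=\tfrac12\Big(\sum_{i=1}^n x_i\Big)^2-\sum_{i=1}^n c_ix_i\quad\text{subject to } 0\le x\le u . \] For $k=0,\dots,n$ let $U_k=\sum_{i=1}^k u_i$ ($U_0=0$) and let $x^{(k)}$ be the vector with $x^{(k)}_i=u_i$ for $i\le k$ and $x^{(k)}_i=0$ for $i>k$. For $k=1,\dots,n$ let $G_k=U_{k-1}+\frac12u_k-c_k$. Let $e_i$ be the $i$-th standard unit vector. (i) If $\bar n$, the smallest index in $\{1,\dots,n\}$ with $G_{\bar n}\ge0$, exists and satisfies $1<\bar n\le n$, let $\delta_1=\min\{c_{\bar n-1}-U_{\bar n-2},u_{\bar n-1}\}$, $\delta_2=\max\{c_{\bar n}-U_{\bar n-1},0\}$, $\bar x=x^{(\bar n-2)}+\delta_1e_{\bar n-1}$, $\tilde x=x^{(\bar n-1)}+\delta_2e_{\bar n}$. Then $\min\{f(\bar x),f(\tilde x)\}$ is the optimal value of (P). (ii) If $G_1\ge 0$ (i.e. $\bar n=1$), let $\tilde x=\min\{c_1,u_1\}\,e_1$. Then $f(\tilde x)$ is the optimal value of (P). (iii) If $G_k<0$ for all $k=1,\dots,n$, let $\delta'=\min\{c_n-U_{n-1},u_n\}$ and $\tilde x=x^{(n-1)}+\delta'e_n$. Then $\tilde x$ is an optimal solution of (P),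 i.e. $f(\tilde x)$ is its optimal value.
   Context: Inequalities between vectors are componentwise. *)

(* Defs.v *)
From HB Require Import structures.
From mathcomp Require Import all_boot all_order all_algebra.
Set Implicit Arguments. Unset Strict Implicit. Unset Printing Implicit Defensive.
Import Order.TTheory GRing.Theory Num.Theory.
Local Open Scope ring_scope.

(* Vectors in R^n are functions 'I_n -> R; coordinate i : 'I_n (0-based)
   corresponds to the paper's coordinate i+1 (1-based). *)

Section Defs.
Variables (R : realFieldType) (n : nat).

(* 1-based access: at1 v k = v_k for 1 <= k <= n, and 0 otherwise *)
Definition at1 (v : 'I_n -> R) (k : nat) : R :=
  if insub k.-1 is Some i then (if (0 < k)%N then v i else 0) else 0.

Definition fobj (c x : 'I_n -> R) : R :=
  2^-1 * (\sum_(i < n) x i) ^+ 2 - \sum_(i < n) c i * x i.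

Definition feasible (u x : 'I_n -> R) : Prop :=
  forall i : 'I_n, 0 <= x i /\ x i <= u i.

Definition is_opt_value (c u : 'I_n -> R) (v : R) : Prop :=
  (exists x0, feasible u x0 /\ fobj c x0 = v) /\
  (forall x, feasible u x -> v <= fobj c x).

Definition is_opt_sol (c u x : 'I_n -> R) : Prop :=
  feasible u x /\ (forall y, feasible u y -> fobj c x <= fobj c y).

Definition Usum (u : 'I_n -> R) (k : nat) : R :=
  \sum_(i < n | (i < k)%N) u i.

Definition xk (u : 'I_n -> R) (k : nat) : 'I_n -> R :=
  fun i => if (i < k)%N then u i else 0.

Definition unitv (j : nat) : 'I_n -> R :=
  fun i => if (i.+1 == j)%N then 1 else 0.

Definition Gk (c u : 'I_n -> R) (k : nat) : R :=
  Usum u k.-1 + 2^-1 * at1 u k - at1 c k.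

Definition vadd (x y : 'I_n -> R) : 'I_n -> R := fun i => x i + y i.
Definition vscale (a : R) (x : 'I_n -> R) : 'I_n -> R := fun i => a * x i.

End Defs.
Arguments unitv {R n} j _.

(* Main.v *)
Require Import Defs.
From HB Require Import structures.
From mathcomp Require Import all_boot all_order all_algebra.
From mathcomp Require Import ring lra.
Import Order.TTheory GRing.Theory Num.Theory.
Local Open Scope ring_scope.
Set Implicit Arguments. Unset Strict Implicit.

Section H.
Variables (R : realFieldType) (n : nat).
Implicit Types (c u p x : 'I_n -> R).

Lemma at1E (v : 'I_n -> R) (k : nat) (hk : (k < n)%N) : at1 v k.+1 = v (Ordinal hk).
Proof.
rewrite /at1 /=. have -> : insub k = Some (Ordinal hk) by exact: (@valK _ _ _ (Ordinal hk)).
by [].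
Qed.

Lemma kkt c u p : feasible u p ->
  (forall i, (p i = 0 /\ c i <= \sum_j p j) \/ (p i = u i /\ \sum_j p j <= c i)
      \/ \sum_j p j = c i) ->
  forall x, feasible u x -> fobj c p <= fobj c x.
Proof.
move=> fp hk x fx.
set sp := \sum_j p j. set sx := \sum_j x j.
have E : \sum_i (sp - c i) * (x i - p i) =
   (sp * sx - sp * sp) - (\sum_i c i * x i - \sum_i c i * p i).
  rewrite (eq_bigr (fun i => (sp * x i - sp * p i) - (c i * x i - c i * p i))); last first.
    by move=> i _; ring.
  by rewrite !sumrB -!mulr_sumr.
have H0 : 0 <= \sum_i (sp - c i) * (x i - p i).
  apply: sumr_ge0 => i _.
  have [h1 h2] := fp i; have [h3 h4] := fx i.
  have := hk i; rewrite -/sp; case=> [[e h]|[[e h]|e]]; rewrite e; try nra.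
have H1 : 0 <= 2^-1 * (sx - sp) ^+ 2.
  apply: mulr_ge0; last exact: sqr_ge0. rewrite invr_ge0; lra.
rewrite /fobj -/sp -/sx.
suff -> : 2^-1 * sx ^+ 2 - \sum_i c i * x i =
  2^-1 * sp ^+ 2 - \sum_i c i * p i + (2^-1 * (sx - sp) ^+ 2 + \sum_i (sp - c i) * (x i - p i)).
  lra.
rewrite E. by field.
Qed.


Definition P u (K : 'I_n) (d : R) := vadd (xk u K) (vscale d (unitv K.+1)).

Lemma PE u K d i : P u K d i = if (i < K)%N then u i else if (i == K :> nat) then d else 0.
Proof.
rewrite /P /vadd /xk /vscale /unitv eqSS.
case: ltngtP => h; rewrite ?mulr1 ?mulr0 ?addr0 ?add0r //.
Qed.

Lemma Psum u K d : \sum_i P u K d i = Usum u K + d.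
Proof.
rewrite /P /vadd big_split /= /Usum [in RHS]big_mkcond /=; congr (_ + _); rewrite /vscale /unitv.
rewrite -mulr_sumr (bigD1 K) //= eqxx big1 ?addr0 ?mulr1 // => i hi.
rewrite eqSS; case: eqP => // h; exfalso; move/eqP: hi; apply; exact: val_inj.
Qed.

Lemma UsumS u (K : 'I_n) : Usum u K.+1 = Usum u K + u K.
Proof.
rewrite /Usum (bigD1 K) //= addrC; congr (_ + _); apply: eq_bigl => i.
rewrite ltnS -(inj_eq val_inj) /=; by case: ltngtP.
Qed.

Lemma Usum0 u : Usum u 0 = 0.
Proof. by rewrite /Usum big_pred0. Qed.

Lemma feasP u K d : (forall i, 0 < u i) -> 0 <= d <= u K -> feasible u (P u K d).
Proof.
move=> hu /andP[h1 h2] i; rewrite PE.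
case: ltngtP => h /=.
- have := hu i; split; lra.
- have := hu i; split; lra.
- have -> : i = K by exact: val_inj. split; lra.
Qed.

Lemma seg_opt c u K d :
  (forall i j : 'I_n, (i <= j)%N -> c j <= c i) ->
  (forall i, 0 < u i) -> 0 <= d <= u K ->
  ((d = u K /\ Usum u K + d <= c K) \/ Usum u K + d = c K) ->
  (forall i : 'I_n, (K < i)%N -> c i <= Usum u K + d) ->
  is_opt_sol c u (P u K d).
Proof.
move=> hc hu hd hs hgt; have fP := @feasP u K d hu hd; split => //.
apply: kkt => // i; rewrite Psum PE.
have sK : Usum u K + d <= c K by case: hs => [[_ ->]|->].
case: ltngtP => h.
- right; left; split => //. apply: le_trans sK _; apply: hc; exact: ltnW.
- left; split => //; exact: hgt.
- have -> : i = K by exact: val_inj.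
  by case: hs => [[-> h']|->]; [right; left | right; right].
Qed.

Lemma sol_value c u x : is_opt_sol c u x -> is_opt_value c u (fobj c x).
Proof. by case=> f h; split; [exists x | ]. Qed.

Lemma fobj_ext c x y : x =1 y -> fobj c x = fobj c y.
Proof.
move=> e; rewrite /fobj (eq_bigr _ (fun i _ => e i)); congr (_ - _).
by apply: eq_bigr => i _; rewrite e.
Qed.


Lemma min_val1 c u a b : is_opt_sol c u a -> feasible u b ->
  is_opt_value c u (Num.min (fobj c a) (fobj c b)).
Proof. move=> [fa ha] fb; rewrite min_l; [exact: sol_value | exact: ha]. Qed.

Lemma min_val2 c u a b : is_opt_sol c u b -> feasible u a ->
  is_opt_value c u (Num.min (fobj c a) (fobj c b)).
Proof. move=> [fb hb] fa; rewrite min_r; [exact: sol_value | exact: hb]. Qed.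

End H.
Theorem theorem4 (R : realFieldType) (n : nat) (c u : 'I_n -> R) :
  (1 <= n)%N ->
  (forall i j : 'I_n, (i <= j)%N -> c j <= c i) ->
  (forall i : 'I_n, 0 <= c i) ->
  (forall i : 'I_n, 0 < u i) ->
  (* (i) *)
  (forall nb : nat,
     (1 < nb <= n)%N ->
     0 <= Gk c u nb ->
     (forall k : nat, (1 <= k < nb)%N -> Gk c u k < 0) ->
     let d1 := Num.min (at1 c nb.-1 - Usum u nb.-2) (at1 u nb.-1) in
     let d2 := Num.max (at1 c nb - Usum u nb.-1) 0 in
     let xbar := vadd (xk u nb.-2) (vscale d1 (unitv nb.-1)) in
     let xtil := vadd (xk u nb.-1) (vscale d2 (unitv nb)) in
     is_opt_value c u (Num.min (fobj c xbar) (fobj c xtil)))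
  /\
  (* (ii) *)
  (0 <= Gk c u 1 ->
     is_opt_value c u
       (fobj c (vscale (Num.min (at1 c 1) (at1 u 1)) (unitv 1))))
  /\
  (* (iii) *)
  ((forall k : nat, (1 <= k <= n)%N -> Gk c u k < 0) ->
     let d' := Num.min (at1 c n - Usum u n.-1) (at1 u n) in
     let xtil := vadd (xk u n.-1) (vscale d' (unitv n)) in
     is_opt_sol c u xtil /\ is_opt_value c u (fobj c xtil)).
Proof.
move=> n1 hc hc0 hu; split; [|split].
- case=> [|[|m]] hnb //.
  have hm1 : (m.+1 < n)%N by [].
  have hm : (m < n)%N by apply: ltnW.
  move=> hG hlt; have hG1 := hlt m.+1 (leqnn _).
  rewrite /Gk /= (at1E u hm1) (at1E c hm1) (UsumS u (Ordinal hm)) /= in hG.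
  rewrite /Gk /= (at1E u hm) (at1E c hm) in hG1.
  rewrite /= (at1E u hm) (at1E c hm) (at1E c hm1) (UsumS u (Ordinal hm)) /=.
  set J := Ordinal hm in hG hG1 *; set K := Ordinal hm1 in hG hG1 *; set U := Usum u m in hG hG1 *.
  set d1 := Num.min (c J - U) _; set d2 := Num.max (c K - _) _.
  change (is_opt_value c u (Num.min (fobj c (P u J d1)) (fobj c (P u K d2)))).
  have uJ := hu J; have uK := hu K.
  have cKJ : c K <= c J by apply: hc => /=; exact: leqnSn.
  have hUK : Usum u K = U + u J by rewrite /= (UsumS u J).
  have UJ : Usum u J = U by [].
  have fd2 : 0 <= d2 <= u K.
    rewrite /d2; case: (leP (c K - (U + u J)) 0) => h;
      rewrite ?max_r ?max_l ?(ltW h) //; apply/andP; split; lra.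
  have fx2 := feasP hu fd2.
  have hgtJ : forall i : 'I_n, (J < i)%N -> c i <= c K by move=> i hi; apply: hc.
  have [h1|h1] := leP (c J - U) (u J).
  + have ed1 : d1 = c J - U by rewrite /d1 min_l.
    apply: min_val1 => //. apply: seg_opt => //.
    * rewrite ed1; apply/andP; split; lra.
    * right; rewrite UJ ed1; lra.
    * move=> i hi; rewrite UJ ed1; have := hgtJ i hi; lra.
  + have ed1 : d1 = u J by rewrite /d1 min_r // ltW.
    have [h2|h2] := leP (c K) (U + u J).
    * apply: min_val1 => //; apply: seg_opt => //.
      - rewrite ed1; apply/andP; split; lra.
      - left; split => //; rewrite UJ ed1; lra.
      - move=> i hi; rewrite UJ ed1; have := hgtJ i hi; lra.
    * have ed2 : d2 = c K - (U + u J) by rewrite /d2 max_l // ltW // subr_gt0.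
      apply: min_val2; last by apply: feasP => //; rewrite ed1; apply/andP; split; lra.
      apply: seg_opt => //.
      - right; rewrite hUK ed2; lra.
      - move=> i hi; rewrite hUK ed2; have := hc K i (ltnW hi); lra.
- move=> hG; set J := Ordinal n1.
  rewrite /Gk /= Usum0 (at1E u n1) (at1E c n1) in hG.
  rewrite (at1E u n1) (at1E c n1).
  have uJ := hu J; have cJ := hc0 J.
  have ed : Num.min (c J) (u J) = c J by rewrite min_l //; lra.
  rewrite ed (@fobj_ext _ _ c _ (P u J (c J))) => [|i]; last first.
    rewrite PE /vscale /unitv /=; case: (nat_of_ord i) => [|k] /=;
      by rewrite ?mulr1 ?mulr0.
  apply: sol_value; apply: seg_opt => //.
  + apply/andP; split; lra.
  + by right; rewrite Usum0 add0r.
  + move=> i hi; rewrite Usum0 add0r; exact: hc.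
- case: n c u n1 hc hc0 hu => [|n'] // c u n1 hc hc0 hu hall.
  have hK : (n' < n'.+1)%N by [].
  set K := Ordinal hK.
  have hG := hall n'.+1 (leqnn _).
  rewrite /Gk /= (at1E u hK) (at1E c hK) in hG.
  rewrite /= (at1E u hK) (at1E c hK).
  set d := Num.min _ _.
  change (is_opt_sol c u (P u K d) /\ is_opt_value c u (fobj c (P u K d))).
  have uK := hu K.
  suff hs : is_opt_sol c u (P u K d) by split => //; exact: sol_value.
  have [h1|h1] := leP (c K - Usum u n') (u K).
  + have ed : d = c K - Usum u n' by rewrite /d min_l.
    apply: seg_opt => //.
    * rewrite ed; apply/andP; split; lra.
    * right; rewrite ed /=; lra.
    * move=> i hi; exfalso; move: (ltn_ord i); by rewrite ltnS leqNgt hi.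
  + have ed : d = u K by rewrite /d min_r // ltW.
    apply: seg_opt => //.
    * rewrite ed; apply/andP; split; lra.
    * left; rewrite ed /=; split => //; lra.
    * move=> i hi; exfalso; move: (ltn_ord i); by rewrite ltnS leqNgt hi.
Qed.
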